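(* Let $\mathcal{B}$ be an associative algebra over $\mathbb{C}$, let $\mathcal{A}$ denote the set of all matrices (of arbitrary finite sizes) with entries in $\mathcal{B}$, with the convention that the product of two matrices is defined to be zero if their sizes do not match, and let $\Omega = \mathcal{A}\otimes\bigwedge(\mathbb{C}^2)$. Suppose $(\Omega,\mathrm{d},\bar{\mathrm{d}})$ is a bidifferential calculus. Fix positive integers $n,N,N'$. Let $\boldsymbol{P},\boldsymbol{R}\in\mathrm{Mat}(N,N,\mathcal{B})$, $\tilde{\boldsymbol{U}}\in\mathrm{Mat}(n,N',\mathcal{B})$ and $\tilde{\boldsymbol{V}}\in\mathrm{Mat}(N,n,\mathcal{B})$ be both $\mathrm{d}$-constant and $\bar{\mathrm{d}}$-constant, and put $\boldsymbol{Q}=\tilde{\boldsymbol{V}}\tilde{\boldsymbol{U}}$. Let $\boldsymbol{X}\in\mathrm{Mat}(N,N,\mathcal{B})$ and $\boldsymbol{Y}\in\mathrm{Mat}(N',N,\mathcal{B})$ satisfy $$\bar{\mathrm{d}}\boldsymbol{X}=(\mathrm{d}\boldsymbol{X})\,\boldsymbol{P},\qquad \bar{\mathrm{d}}\boldsymbol{Y}=(\mathrm{d}\boldsymbol{Y})\,\boldsymbol{P},\qquad \boldsymbol{R}\boldsymbol{X}-\boldsymbol{X}\boldsymbol{P}=-\boldsymbol{Q}\boldsymbol{Y}.$$ If $\boldsymbol{X}$ is invertible, then $\phi=\tilde{\boldsymbol{U}}\boldsymbol{Y}\boldsymbol{X}^{-1}\tilde{\boldsymbol{V}}\in\mathrm{Mat}(n,n,\mathcal{B})$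 satisfies $$\bar{\mathrm{d}}\phi=(\mathrm{d}\phi)\,\phi+\mathrm{d}\vartheta\qquad\text{with}\qquad \vartheta=\tilde{\boldsymbol{U}}\boldsymbol{Y}\boldsymbol{X}^{-1}\boldsymbol{R}\tilde{\boldsymbol{V}},$$ and consequently $\bar{\mathrm{d}}\,\mathrm{d}\,\phi=\mathrm{d}\phi\;\mathrm{d}\phi$.
   Context: A graded algebra is an associative algebra $\Omega$ over $\mathbb{C}$ with a decomposition $\Omega=\bigoplus_{r\ge0}\Omega^r$ into a subalgebra $\Omega^0$ and $\Omega^0$-bimodules $\Omega^r$ with $\Omega^r\Omega^s\subseteq\Omega^{r+s}$; here $\Omega^r=\mathcal{A}\otimes\bigwedge^r(\mathbb{C}^2)$. A bidifferential calculus is a unital graded algebra $\Omega$ with two $\mathbb{C}$-linear maps $\mathrm{d},\bar{\mathrm{d}}:\Omega\to\Omega$ of degree one (mapping $\Omega^r$ into $\Omega^{r+1}$) such that, for every $z\in\mathbb{C}$, $\mathrm{d}_z:=\bar{\mathrm{d}}-z\,\mathrm{d}$ satisfies $\mathrm{d}_z^2=0$ and the graded Leibniz rule $\mathrm{d}_z(\chi\chi')=(\mathrm{d}_z\chi)\chi'+(-1)^r\chi\,\mathrm{d}_z\chi'$ for $\chi\in\Omega^r$, $\chi'\in\Omega$ (equivalently: $\mathrm{d},\bar{\mathrm{d}}$ are graded derivations with $\mathrm{d}^2=\bar{\mathrm{d}}^2=\mathrm{d}\bar{\mathrm{d}}+\bar{\mathrm{d}}\mathrm{d}=0$). Here $\mathrm{d}$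 and $\bar{\mathrm{d}}$ act on matrices of all sizes over $\mathcal{B}$, and the Leibniz rule holds for all products of matrices of compatible sizes. An element $\chi$ is called $\mathrm{d}$-constant if $\mathrm{d}\chi=0$ and $\bar{\mathrm{d}}$-constant if $\bar{\mathrm{d}}\chi=0$. *)

(* Defs.v *)
From HB Require Import structures.
From mathcomp Require Import all_boot all_order all_algebra.
Set Implicit Arguments. Unset Strict Implicit. Unset Printing Implicit Defensive.
Import GRing.Theory.
Local Open Scope ring_scope.

(* Matrix-valued differential forms: an m x n matrix with entries in
   Omega = B (x) /\(C^2), written in the basis 1, e1, e2, e1/\e2 of /\(C^2):
   chi = fc0 + fc1 e1 + fc2 e2 + fc12 e1/\e2 with fc* in Mat(m,n,B). *)
Section Forms.
Variables (F : fieldType) (B : algType F).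

Record form (m n : nat) := Form {
  fc0 : 'M[B]_(m, n); fc1 : 'M[B]_(m, n);
  fc2 : 'M[B]_(m, n); fc12 : 'M[B]_(m, n) }.

Definition fzero m n : form m n := Form 0 0 0 0.

Definition fadd m n (a b : form m n) : form m n :=
  Form (fc0 a + fc0 b) (fc1 a + fc1 b) (fc2 a + fc2 b) (fc12 a + fc12 b).

Definition fscale m n (c : F) (a : form m n) : form m n :=
  Form (map_mx ( *:%R c) (fc0 a)) (map_mx ( *:%R c) (fc1 a))
       (map_mx ( *:%R c) (fc2 a)) (map_mx ( *:%R c) (fc12 a)).

(* product in Mat(B) (x) /\(C^2): e1 e1 = e2 e2 = 0, e2 e1 = - e1 e2 *)
Definition fmul m n p (a : form m n) (b : form n p) : form m p :=
  Form (fc0 a *m fc0 b)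
       (fc0 a *m fc1 b + fc1 a *m fc0 b)
       (fc0 a *m fc2 b + fc2 a *m fc0 b)
       (fc0 a *m fc12 b + fc12 a *m fc0 b + fc1 a *m fc2 b - fc2 a *m fc1 b).

Definition mx0 m n (M : 'M[B]_(m, n)) : form m n := Form M 0 0 0.

Definition homog (r : nat) m n (a : form m n) : Prop :=
  match r with
  | 0 => fc1 a = 0 /\ fc2 a = 0 /\ fc12 a = 0
  | 1 => fc0 a = 0 /\ fc12 a = 0
  | 2 => fc0 a = 0 /\ fc1 a = 0 /\ fc2 a = 0
  | _ => a = fzero m n
  end.

Definition formop := forall m n : nat, form m n -> form m n.

Definition graded_derivation (D : formop) : Prop :=
  (forall m n (a b : form m n), D m n (fadd a b) = fadd (D m n a) (D m n b)) /\
  (forall m n (c : F) (a : form m n), D m n (fscale c a) = fscale c (D m n a)) /\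
  (forall (r : nat) m n (a : form m n), homog r a -> homog r.+1 (D m n a)) /\
  (forall (r : nat) m n p (a : form m n) (b : form n p), homog r a ->
      D m p (fmul a b) = fadd (fmul (D m n a) b) (fscale ((-1) ^+ r) (fmul a (D n p b)))).

Definition bidifferential_calculus (d dbar : formop) : Prop :=
  [/\ graded_derivation d, graded_derivation dbar,
      (forall m n (a : form m n), d m n (d m n a) = fzero m n),
      (forall m n (a : form m n), dbar m n (dbar m n a) = fzero m n) &
      (forall m n (a : form m n),
          fadd (d m n (dbar m n a)) (dbar m n (d m n a)) = fzero m n)].

End Forms.

(* Main.v *)
Require Import Defs.
From HB Require Import structures.
From mathcomp Require Import all_boot all_order all_algebra.
Import GRing.Theory.
Local Open Scope ring_scope.

Section Alg.
Variables (F : fieldType) (B : algType F).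
Variable a : forall {m n}, 'M[B]_(m, n) -> 'M[B]_(m, n).
Hypothesis La : forall m n p (A : 'M[B]_(m,n)) (C : 'M[B]_(n,p)),
  a (A *m C) = a A *m C + A *m a C.

Lemma inv_der N (X Xinv : 'M[B]_N) : X *m Xinv = 1%:M -> Xinv *m X = 1%:M ->
  a Xinv = - (Xinv *m a X *m Xinv).
Proof.
move=> h1 h2.
have e : a Xinv = a Xinv + Xinv *m a X *m Xinv + a Xinv.
  rewrite -{1}[Xinv]mul1mx -{1}h2 La La mulmxDl -!mulmxA h1 mulmx1.
  by rewrite !mulmxA h2 mul1mx.
have h : Xinv *m a X *m Xinv + a Xinv = 0.
  by apply: (addrI (a Xinv)); rewrite addr0 addrA -e.
by rewrite -[a Xinv](addKr (Xinv *m a X *m Xinv)) h addr0.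
Qed.
End Alg.

Section Key.
Variables (F : fieldType) (B : algType F).
Variables (a b : forall {m n}, 'M[B]_(m, n) -> 'M[B]_(m, n)).
Hypothesis La : forall m n p (A : 'M[B]_(m,n)) (C : 'M[B]_(n,p)), a (A *m C) = a A *m C + A *m a C.
Hypothesis Lb : forall m n p (A : 'M[B]_(m,n)) (C : 'M[B]_(n,p)), b (A *m C) = b A *m C + A *m b C.
Lemma key
  (n N N' : nat) (P R : 'M[B]_N) (U : 'M[B]_(n, N')) (V : 'M[B]_(N, n))
  (X Xinv : 'M[B]_N) (Y : 'M[B]_(N', N))
  (aU : a U = 0) (bU : b U = 0) (aV : a V = 0) (bV : b V = 0) (aR : a R = 0)
  (HX : b X = a X *m P) (HY : b Y = a Y *m P)
  (HRX : R *m X - X *m P = - ((V *m U) *m Y))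
  (HXinv1 : X *m Xinv = 1%:M) (HXinv2 : Xinv *m X = 1%:M) :
  b (U *m Y *m Xinv *m V) = a (U *m Y *m Xinv *m V) *m (U *m Y *m Xinv *m V)
     + a (U *m Y *m Xinv *m R *m V).
Proof.
have bZ : b (Y *m Xinv) = a (Y *m Xinv) *m X *m P *m Xinv.
  rewrite La Lb (@inv_der _ _ _ Lb _ _ _ HXinv1 HXinv2) (@inv_der _ _ _ La _ _ _ HXinv1 HXinv2) HX HY.
  rewrite !mulmxDl !mulmxN !mulNmx !mulmxA -[a Y *m Xinv *m X]mulmxA HXinv2 mulmx1.
  by rewrite -[Y *m Xinv *m a X *m Xinv *m X]mulmxA HXinv2 mulmx1.
have E : V *m U *m (Y *m Xinv) = X *m P *m Xinv - R.
  rewrite mulmxA -[V *m U *m Y]opprK -HRX opprB mulmxBl -[R *m X *m Xinv]mulmxA HXinv1 mulmx1.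
  by [].
rewrite -!(mulmxA U Y Xinv).
set Z := Y *m Xinv in bZ E *.
have aUZ : forall k (W : 'M[B]_(N,k)), a (U *m Z *m W) = U *m a Z *m W + U *m Z *m a W.
  by move=> k W; rewrite La La aU mul0mx add0r.
have bUZ : b (U *m Z *m V) = U *m b Z *m V.
  by rewrite Lb Lb bU bV mul0mx add0r mulmx0 addr0.
rewrite -[U *m Z *m R *m V]mulmxA bUZ !aUZ aV La aR aV !mulmx0 !mul0mx !addr0 ?add0r.
rewrite mulmx0 addr0 !mulmxA.

have -> : U *m a Z *m V *m U *m Y *m Xinv *m V = U *m a Z *m (V *m U *m Z) *m V.
  by rewrite !mulmxA.
rewrite E mulmxBr mulmxBl subrK bZ !mulmxA.
by [].
Qed.
End Key.

Lemma aux (V : zmodType) (x y : V) : - x + y = 0 -> y = x.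
Proof. by move/eqP; rewrite addrC subr_eq0 => /eqP. Qed.

Section FormLemmas.
Variables (F : fieldType) (B : algType F).

Lemma form_ext m n (x y : Defs.form B m n) : fc0 x = fc0 y -> fc1 x = fc1 y ->
  fc2 x = fc2 y -> fc12 x = fc12 y -> x = y.
Proof. by case: x => ????; case: y => ???? /= -> -> -> ->. Qed.

Lemma map_scale1 m n (M : 'M[B]_(m,n)) : map_mx ( *:%R (1:F)) M = M.
Proof. by apply/matrixP => i j; rewrite mxE scale1r. Qed.

Lemma map_scaleN1 m n (M : 'M[B]_(m,n)) : map_mx ( *:%R (-1:F)) M = - M.
Proof. by apply/matrixP => i j; rewrite !mxE scaleN1r. Qed.

Lemma fscale1 m n (x : Defs.form B m n) : fscale 1 x = x.
Proof. by case: x => ????; rewrite /fscale /= !map_scale1. Qed.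

Variable D : formop B.
Hypothesis HD : graded_derivation D.

Lemma Dhom m n (M : 'M[B]_(m,n)) : fc0 (D _ _ (mx0 M)) = 0 /\ fc12 (D _ _ (mx0 M)) = 0.
Proof.
case: HD => _ [_ [Hh _]].
by apply: (Hh 0%N) => /=.
Qed.

Lemma DL m n p (A : 'M[B]_(m,n)) (C : 'M[B]_(n,p)) :
  D _ _ (mx0 (A *m C)) = fadd (fmul (D _ _ (mx0 A)) (mx0 C)) (fmul (mx0 A) (D _ _ (mx0 C))).
Proof.
case: HD => _ [_ [_ Hl]].
have -> : mx0 (A *m C) = fmul (mx0 A) (mx0 C).
  by rewrite /fmul /mx0 /= !mulmx0 !mul0mx !addr0 subr0.
by rewrite (Hl 0%N) // expr0 fscale1.
Qed.

Lemma D1L m n p (A : 'M[B]_(m,n)) (C : 'M[B]_(n,p)) :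
  fc1 (D _ _ (mx0 (A *m C))) = fc1 (D _ _ (mx0 A)) *m C + A *m fc1 (D _ _ (mx0 C)).
Proof. by rewrite DL /= mulmx0 add0r mul0mx addr0. Qed.

Lemma D2L m n p (A : 'M[B]_(m,n)) (C : 'M[B]_(n,p)) :
  fc2 (D _ _ (mx0 (A *m C))) = fc2 (D _ _ (mx0 A)) *m C + A *m fc2 (D _ _ (mx0 C)).
Proof. by rewrite DL /= mulmx0 add0r mul0mx addr0. Qed.
End FormLemmas.


Theorem theorem1 (F : fieldType) (B : algType F) (d dbar : formop B)
  (Hcalc : bidifferential_calculus d dbar)
  (n N N' : nat) (hn : (0 < n)%N) (hN : (0 < N)%N) (hN' : (0 < N')%N)
  (P R : 'M[B]_N) (U : 'M[B]_(n, N')) (V : 'M[B]_(N, n))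
  (dP : d _ _ (mx0 P) = fzero _ _ _) (dbP : dbar _ _ (mx0 P) = fzero _ _ _)
  (dR : d _ _ (mx0 R) = fzero _ _ _) (dbR : dbar _ _ (mx0 R) = fzero _ _ _)
  (dU : d _ _ (mx0 U) = fzero _ _ _) (dbU : dbar _ _ (mx0 U) = fzero _ _ _)
  (dV : d _ _ (mx0 V) = fzero _ _ _) (dbV : dbar _ _ (mx0 V) = fzero _ _ _)
  (X Xinv : 'M[B]_N) (Y : 'M[B]_(N', N))
  (HX : dbar _ _ (mx0 X) = fmul (d _ _ (mx0 X)) (mx0 P))
  (HY : dbar _ _ (mx0 Y) = fmul (d _ _ (mx0 Y)) (mx0 P))
  (HRX : R *m X - X *m P = - ((V *m U) *m Y))
  (HXinv1 : X *m Xinv = 1%:M) (HXinv2 : Xinv *m X = 1%:M) :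
  let phi := U *m Y *m Xinv *m V in
  let theta := U *m Y *m Xinv *m R *m V in
  dbar _ _ (mx0 phi) = fadd (fmul (d _ _ (mx0 phi)) (mx0 phi)) (d _ _ (mx0 theta)) /\
  dbar _ _ (d _ _ (mx0 phi)) = fmul (d _ _ (mx0 phi)) (d _ _ (mx0 phi)).
Proof.
move=> phi theta.
have Hc := Hcalc; case: Hc => Hd Hdb Hdd Hdbdb Hanti.
have part1 : dbar _ _ (mx0 phi) = fadd (fmul (d _ _ (mx0 phi)) (mx0 phi)) (d _ _ (mx0 theta)).
  apply: form_ext => /=.
  - by rewrite (proj1 (@Dhom _ _ _ Hdb _ _ phi)) (proj1 (@Dhom _ _ _ Hd _ _ phi)) (proj1 (@Dhom _ _ _ Hd _ _ theta)) mul0mx addr0.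
  - rewrite mulmx0 add0r.
    apply: (@key F B (fun m n M => fc1 (d m n (mx0 M))) (fun m n M => fc1 (dbar m n (mx0 M))) _ _ n N N' P R U V X Xinv Y).
    + by move=> *; apply: D1L.
    + by move=> *; apply: D1L.
    + by rewrite dU.
    + by rewrite dbU.
    + by rewrite dV.
    + by rewrite dbV.
    + by rewrite dR.
    + by rewrite /= HX /= mulmx0 add0r.
    + by rewrite /= HY /= mulmx0 add0r.
    + exact: HRX.
    + exact: HXinv1.
    + exact: HXinv2.
  - rewrite mulmx0 add0r.
    apply: (@key F B (fun m n M => fc2 (d m n (mx0 M))) (fun m n M => fc2 (dbar m n (mx0 M))) _ _ n N N' P R U V X Xinv Y).
    + by move=> *; apply: D2L.
    + by move=> *; apply: D2L.
    + by rewrite dU.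
    + by rewrite dbU.
    + by rewrite dV.
    + by rewrite dbV.
    + by rewrite dR.
    + by rewrite /= HX /= mulmx0 add0r.
    + by rewrite /= HY /= mulmx0 add0r.
    + exact: HRX.
    + exact: HXinv1.
    + exact: HXinv2.
  - by rewrite (proj2 (@Dhom _ _ _ Hdb _ _ phi)) (proj2 (@Dhom _ _ _ Hd _ _ phi)) (proj2 (@Dhom _ _ _ Hd _ _ theta)) (proj1 (@Dhom _ _ _ Hd _ _ phi)) !mulmx0 !mul0mx !addr0 subr0.
split => //.
have H5 := Hanti _ _ (mx0 phi).
rewrite part1 in H5.
have hom1 : homog 1 (d _ _ (mx0 phi)).
  by case: Hd => _ [_ [Hh _]]; apply: (Hh 0%N).
case: Hd => Hadd [_ [_ Hl]].
rewrite Hadd Hdd (Hl 1%N) // Hdd expr1 in H5.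
move: H5 => /= H5.
have c0 := congr1 (@fc0 _ _ _ _) H5.
have c1 := congr1 (@fc1 _ _ _ _) H5.
have c2 := congr1 (@fc2 _ _ _ _) H5.
have c12 := congr1 (@fc12 _ _ _ _) H5.
move: c0 c1 c2 c12 => /=; rewrite !map_scaleN1 !mul0mx.
rewrite ?sub0r ?add0r ?addr0 ?subr0 ?sub0r ?add0r => e0 e1 e2 e12.
move: e12; rewrite oppr0 add0r => e12.
by apply: form_ext => /=; apply: aux.
Qed.
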